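(* With the setting in the context, for all $x\in K_n$, $y\in K_m$, $r,r''\in\widehat G_{n+1}$, $r'\in\widehat G_{m+1}$, $g\in G_{n-1}$, $g',g''\in G_{m-1}$: (i) $A_x^rA_y^{r'}=A_y^{r'}A_x^r$, $B_x^gB_y^{g'}=B_y^{g'}B_x^g$, and $A_x^rB_y^{g'}=B_y^{g'}A_x^r$; (ii) $A_x^rA_x^{r''}=\delta(r,r'')A_x^r$ and $B_y^{g'}B_y^{g''}=\delta(g',g'')B_y^{g'}$, where $\delta(\cdot,\cdot)$ is the Kronecker delta; (iii) $\sum_{r\in\widehat G_{n+1}}A_x^r=\mathbb 1$ and $\sum_{g\in G_{n-1}}B_x^g=\mathbb 1$.
   Context: $(C_\bullet,\partial^C_\bullet)$ is a chain complex with each $C_n$ free abelian on a finite set $K_n$, $K_n\ne\emptyset$ for finitely many $n$; $(G_\bullet,\partial^G_\bullet)$ is a chain complex of finite abelian groups, $\widehat{G}_k=\mathrm{Hom}(G_k,U(1))$. $\mathrm{hom}(C,G)^p=\prod_n\mathrm{Hom}(C_n,G_{n-p})$ with $(\delta^pf)_n=f_{n-1}\partial^C_n-(-1)^p\partial^G_{n-p}f_n$. $\mathrm{hom}(C,G)_p=\mathrm{Hom}(\mathrm{hom}(C,G)^p,U(1))$ (written additively), $\chi_m(f)=m(f)$, $\delta_1m=m\circ\delta^0$. $\mathcal H=\bigotimes_n\bigotimes_{x\in K_n}\mathbb C[G_n]$ with orthonormal basis $|f\rangle$, $f\in\mathrm{hom}(C,G)^0$; $P_t|f\rangle=|f+t\rangle$,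 $Q_m|f\rangle=\chi_m(f)|f\rangle$; $A_t=P_{\delta^{-1}t}$ ($t\in\mathrm{hom}(C,G)^{-1}$), $B_m=Q_{\delta_1m}$ ($m\in\mathrm{hom}(C,G)_1$). For $x\in K_n$, $g\in G_{n-p}$, $gx^*\in\mathrm{hom}(C,G)^p$ has $n$-th component sending $x\mapsto g$ and other elements of $K_n$ to $0$, other components $0$; for $r\in\widehat G_{n-p}$, $rx_*\in\mathrm{hom}(C,G)_p$ is $rx_*(f)=r(f_n(x))$. For $x\in K_n$: $A_x^r=\frac1{|G_{n+1}|}\sum_{h\in G_{n+1}}r(h)A_{hx^*}$ ($r\in\widehat G_{n+1}$), and $B_x^g=\frac1{|G_{n-1}|}\sum_{\rho\in\widehat G_{n-1}}\rho(g)B_{\rho x_*}$ ($g\in G_{n-1}$). *)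

(* Defs.v *)
From HB Require Import structures.
From mathcomp Require Import all_boot all_order all_algebra all_fingroup.
From mathcomp Require Import all_solvable all_field all_character.
Set Implicit Arguments. Unset Strict Implicit. Unset Printing Implicit Defensive.
Import GRing.Theory Num.Theory.
Local Open Scope ring_scope.

Definition tr (P : int -> Type) (m n : int) (e : m = n) (a : P m) : P n :=
  eq_rect m P a n e.

Arguments tr P {m n} e a.
Lemma sub1K (n : int) : n - 1 + 1 = n. Proof. by rewrite subrK. Qed.
Lemma add1K (n : int) : n + 1 - 1 = n. Proof. by rewrite addrK. Qed.

Section Setting.
(* C_n = free abelian group on the finite set K n;
   dC n x y = coefficient of y in the boundary d^C_n x  (x : K n, y : K (n-1)). *)
Variable K : int -> finType.
Variable G : int -> finZmodType.
Variable dC : forall n : int, K n -> K (n - 1) -> int.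
Variable dG : forall n : int, {additive G n -> G (n - 1)}.

(* hom(C,G)^p, p = 0, -1, 1  (Hom(C_n, G_k) = maps K_n -> G_k) *)
Definition hom0 := forall n : int, K n -> G n.
Definition homm1 := forall n : int, K n -> G (n + 1).
Definition hom1 := forall n : int, K n -> G (n - 1).

Definition delta_m1 (t : homm1) : hom0 := fun n x =>
  \sum_(y : K (n - 1)) tr (fun k => G k : Type) (sub1K n) (t (n - 1) y) *~ @dC n x y
  + tr (fun k => G k : Type) (add1K n) (@dG (n + 1) (t n x)).

Definition delta0 (f : hom0) : hom1 := fun n x =>
  \sum_(y : K (n - 1)) f (n - 1) y *~ @dC n x y - @dG n (f n x).

(* Hilbert space = functions on the basis hom(C,G)^0; operators on it *)
Definition state := hom0 -> algC.
Definition op := state -> state.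

(* P_t |f> = |f + t> *)
Definition Pop (t : hom0) : op := fun psi f => psi (fun n x => f n x - t n x).
Definition Qop (m : hom0 -> algC) : op := fun psi f => m f * psi f.

Definition Aop_t (t : homm1) : op := Pop (delta_m1 t).
Definition Bop_m (m : hom1 -> algC) : op := Qop (fun f => m (delta0 f)).

Definition costar (n : int) (x : K n) (h : G (n + 1)) : homm1 := fun k y =>
  match n =P k with
  | ReflectT e => if tr (fun k => K k : Type) e x == y then tr (fun j => G (j + 1) : Type) e h else 0
  | ReflectF _ => 0
  end.

Definition chistar (n : int) (x : K n) (rho : Iirr [set: G (n - 1)]) : hom1 -> algC :=
  fun f => 'chi_rho (f n x).

Definition Ax (n : int) (x : K n) (r : Iirr [set: G (n + 1)]) : op := fun psi f =>
  (#|G (n + 1)|%:R)^-1 * \sum_(h : G (n + 1)) 'chi_r h * Aop_t (costar x h) psi f.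

Definition Bx (n : int) (x : K n) (g : G (n - 1)) : op := fun psi f =>
  (#|G (n - 1)|%:R)^-1 *
    \sum_(rho : Iirr [set: G (n - 1)]) 'chi_rho g * Bop_m (chistar x rho) psi f.

Definition op0 : op := fun _ _ => 0.

End Setting.

(* Main.v *)
Require Import Defs.
From HB Require Import structures.
From mathcomp Require Import all_boot all_order all_algebra all_fingroup.
From mathcomp Require Import all_solvable all_field all_character.
From Stdlib Require Import FunctionalExtensionality.
From mathcomp Require Import ring.
Unset Printing Implicit Defensive.
Import GRing.Theory Num.Theory.
Local Open Scope ring_scope.

Section Chars.
 Variable Gt : finZmodType.
Lemma abG : abelian [set: Gt].
Proof. apply/centsP=> a _ b _; exact: addrC. Qed.
Lemma linG (i : Iirr [set: Gt]) : 'chi_i \is a linear_char.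
Proof. exact: (char_abelianP _ abG). Qed.
Lemma chiD (i : Iirr [set: Gt]) a b : 'chi_i (a + b) = 'chi_i a * 'chi_i b.
Proof. exact: (lin_charM (linG i) (in_setT a) (in_setT b)). Qed.
Lemma chi0 (i : Iirr [set: Gt]) : 'chi_i 0 = 1.
Proof. exact: (lin_char1 (linG i)). Qed.
Lemma chiN (i : Iirr [set: Gt]) a : 'chi_i (- a) = ('chi_i a)^*.
Proof. exact: (lin_charV_conj (linG i) (in_setT a)). Qed.
Lemma orth1 (i j : Iirr [set: Gt]) :
  \sum_h 'chi_i h * 'chi_j (- h) = #|Gt|%:R * (i == j)%:R.
Proof.
have := cfdot_irr i j; rewrite cfdotE cardsT => <-.
rewrite mulrA mulfV ?mul1r; last by rewrite pnatr_eq0 -lt0n; apply/card_gt0P; exists 0.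
apply: eq_big => [h|h _]; first by rewrite inE.
by rewrite chiN. Qed.
Lemma orth2 (a : Gt) : \sum_(i : Iirr [set: Gt]) 'chi_i a = #|Gt|%:R * (a == 0)%:R.
Proof.
have := second_orthogonality_relation a (in_setT (0 : Gt)).
under eq_bigr => i _ do rewrite (chi0 i) conjC1 mulr1.
move=> ->.
have -> : 'C_[set: Gt][a]%g = [set: Gt].
  by apply/setIidPl; apply/subsetP => b _; apply/cent1P; exact: addrC.
rewrite cardsT mulr_natr; congr (_ *+ _).
by rewrite -[0 : Gt]/(1%g : Gt) class1G inE.
Qed.
End Chars.

Lemma double_sum (I J : finType) (a b : algC) (u : I -> algC) (v : J -> algC) (F : I -> J -> algC) :
 a * \sum_i u i * (b * \sum_j v j * F i j) = \sum_i \sum_j a * b * u i * v j * F i j.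
Proof.
rewrite mulr_sumr; apply: eq_bigr => i _; rewrite !mulrA mulr_sumr; apply: eq_bigr => j _.
by rewrite !mulrA (mulrAC a (u i)).
Qed.

Section Main.
Variable K : int -> finType.
Variable G : int -> finZmodType.
Variable dC : forall n : int, K n -> K (n - 1) -> int.
Variable dG : forall n : int, {additive G n -> G (n - 1)}.
Hypothesis hC : forall (n : int) (x : K n) (z : K (n - 1 - 1)),
      \sum_(y : K (n - 1)) dC n x y * dC (n - 1) y z = 0.
Hypothesis hG : forall (n : int) (a : G n), dG (n - 1) (dG n a) = 0.

Lemma trD (m k : int) (e : m = k) (a b : G m) :
  tr (fun k => G k : Type) e (a + b) = tr (fun k => G k : Type) e a + tr (fun k => G k : Type) e b.
Proof. by case: k / e. Qed.
Lemma tr0 (m k : int) (e : m = k) :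
  tr (fun k => G k : Type) e (0 : G m) = 0.
Proof. by case: k / e. Qed.
Lemma trD1 (m k : int) (e : m = k) (a b : G (m + 1)) :
  tr (fun j => G (j + 1) : Type) e (a + b) = tr (fun j => G (j + 1) : Type) e a + tr (fun j => G (j + 1) : Type) e b.
Proof. by case: k / e. Qed.
Lemma tr01 (m k : int) (e : m = k) :
  tr (fun j => G (j + 1) : Type) e (0 : G (m + 1)) = 0.
Proof. by case: k / e. Qed.

Lemma trdG (a b : int) (e : a = b) (e' : a - 1 = b - 1) (u : G a) :
  tr (fun k => G k : Type) e' (dG a u) = dG b (tr (fun k => G k : Type) e u).
Proof. case: b / e e' => e'; by rewrite (eq_irrelevance e' erefl). Qed.

Lemma trdG2 (c d : int) (e : c - 1 = d) (v : G c) :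
  dG d (tr (fun k => G k : Type) e (dG c v)) = 0.
Proof. case: d / e; exact: hG. Qed.

Lemma subsubC (V : zmodType) (a b c d : V) : a - b - (c - d) = a - c - (b - d).
Proof. by rewrite -!addrA; congr (_ + _); rewrite !opprB !addrA addrAC (addrC (-b)) addrAC. Qed.

Definition sub0 (f t : hom0 K G) : hom0 K G := fun n x => f n x - t n x.

Lemma delta_m1D (t u v : homm1 K G) :
  (forall k z, t k z = u k z + v k z) ->
  forall n (x : K n), delta_m1 dC dG t x = delta_m1 dC dG u x + delta_m1 dC dG v x.
Proof.
move=> H n x; rewrite /delta_m1 H raddfD trD.
under eq_bigr do rewrite H trD mulrzDl.
by rewrite big_split /= addrACA.
Qed.

Lemma delta_m10 (t : homm1 K G) :
  (forall k z, t k z = 0) -> forall n (x : K n), delta_m1 dC dG t x = 0.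
Proof.
move=> H n x; rewrite /delta_m1 H raddf0 tr0 addr0.
by apply: big1 => z _; rewrite H tr0 mul0rz.
Qed.

Lemma delta0B (f u : hom0 K G) n (x : K n) :
  delta0 dC dG (sub0 f u) x = delta0 dC dG f x - delta0 dC dG u x.
Proof.
rewrite /delta0 /sub0 raddfB.
under eq_bigr do rewrite mulrzBl.
by rewrite sumrB subsubC.
Qed.

Lemma delta0_m1 (t : homm1 K G) n (x : K n) : delta0 dC dG (delta_m1 dC dG t) x = 0.
Proof.
rewrite /delta0 /delta_m1.
under eq_bigr do rewrite mulrzDl mulrz_suml.
rewrite big_split /= raddfD trdG2 addr0 raddf_sum.
rewrite exchange_big /= big1 ?add0r; last first.
  move=> z _; under eq_bigr do rewrite -mulrzA.
  rewrite -mulrz_sumr; under eq_bigr do rewrite mulrC.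
  by rewrite hC mulr0z.
apply/eqP; rewrite subr_eq0; apply/eqP/eq_bigr => y _.
apply/eqP; by rewrite raddfMz (trdG _ _ (sub1K n)).
Qed.


Lemma costarD n (x : K n) (h h' : G (n + 1)) k (z : K k) :
  @costar K G n x (h + h') k z = @costar K G n x h k z + @costar K G n x h' k z.
Proof.
rewrite /costar; case: eqP => [e|_]; last by rewrite addr0.
by case: ifP => _; [exact: trD1 | rewrite addr0].
Qed.

Lemma costar0 n (x : K n) k (z : K k) : @costar K G n x 0 k z = 0.
Proof.
rewrite /costar; case: eqP => [e|_] //.
by case: ifP => _ //; exact: tr01.
Qed.

Definition Dx n (x : K n) (h : G (n + 1)) : hom0 K G := delta_m1 dC dG (costar x h).
Arguments Dx [n] x h.

Lemma sub0_0 n (x : K n) f : sub0 f (Dx x 0) = f.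
Proof.
apply: functional_extensionality_dep => k; apply: functional_extensionality => z.
by rewrite /sub0 /Dx (delta_m10 _ (costar0 _ x)) subr0.
Qed.

Lemma sub0_add n (x : K n) f h h' : sub0 (sub0 f (Dx x h)) (Dx x h') = sub0 f (Dx x (h + h')).
Proof.
apply: functional_extensionality_dep => k; apply: functional_extensionality => z.
by rewrite /sub0 /Dx (delta_m1D _ _ _ (costarD _ x h h')) -addrA -opprD.
Qed.

Lemma sub0C f u v : sub0 (sub0 f u) v = sub0 (sub0 f v) u.
Proof.
apply: functional_extensionality_dep => k; apply: functional_extensionality => z.
by rewrite /sub0 addrAC.
Qed.

Lemma delta0_inv f t m (y : K m) :
  delta0 dC dG (sub0 f (delta_m1 dC dG t)) y = delta0 dC dG f y.
Proof. by rewrite delta0B delta0_m1 subr0. Qed.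

Lemma AxE n (x : K n) r psi f :
  Ax dC dG x r psi f = (#|G (n + 1)|%:R)^-1 * \sum_h 'chi_r h * psi (sub0 f (Dx x h)).
Proof. by []. Qed.

Lemma BxE m (y : K m) g psi f :
  Bx dC dG y g psi f = ((g + delta0 dC dG f y) == 0)%:R * psi f.
Proof.
rewrite /Bx /Bop_m /Qop /chistar.
under eq_bigr do rewrite mulrA -chiD.
rewrite -mulr_suml orth2 !mulrA mulVf ?mul1r //.
by rewrite pnatr_eq0 -lt0n; apply/card_gt0P; exists 0.
Qed.

Lemma cardG_neq0 k : (#|G k|%:R : algC) != 0.
Proof. by rewrite pnatr_eq0 -lt0n; apply/card_gt0P; exists 0. Qed.

Lemma AxAx n m (x : K n) (y : K m) r r' psi f :
  Ax dC dG x r (Ax dC dG y r' psi) f =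
  \sum_h \sum_h' (#|G (n + 1)|%:R)^-1 * (#|G (m + 1)|%:R)^-1 * 'chi_r h * 'chi_r' h'
     * psi (sub0 (sub0 f (Dx x h)) (Dx y h')).
Proof. rewrite AxE; under eq_bigr do rewrite AxE. by rewrite double_sum. Qed.

Lemma A_comm n m (x : K n) (y : K m) r r' psi f :
  Ax dC dG x r (Ax dC dG y r' psi) f = Ax dC dG y r' (Ax dC dG x r psi) f.
Proof.
rewrite !AxAx exchange_big /=.
apply: eq_bigr => h _; apply: eq_bigr => h' _.
by rewrite sub0C (mulrC (_^-1)) (mulrAC _ _ ('chi_r' h)) (mulrAC _ ('chi_r h')).
Qed.

Lemma B_comm n m (x : K n) (y : K m) g g' psi f :
  Bx dC dG x g (Bx dC dG y g' psi) f = Bx dC dG y g' (Bx dC dG x g psi) f.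
Proof. by rewrite !BxE mulrCA. Qed.

Lemma AB_comm n m (x : K n) (y : K m) r g' psi f :
  Ax dC dG x r (Bx dC dG y g' psi) f = Bx dC dG y g' (Ax dC dG x r psi) f.
Proof.
rewrite AxE; under eq_bigr do rewrite BxE /Dx delta0_inv.
rewrite BxE AxE mulrCA; congr (_ * _); rewrite mulr_sumr.
by apply: eq_bigr => h _; rewrite mulrCA.
Qed.

Lemma A_proj n (x : K n) r r'' psi f :
  Ax dC dG x r (Ax dC dG x r'' psi) f = (r == r'')%:R * Ax dC dG x r psi f.
Proof.
rewrite AxAx.
under eq_bigr => h _.
  rewrite (reindex_inj (addrI (- h))) /=.
  under eq_bigr do rewrite sub0_add addNKr chiD.
  over.
rewrite exchange_big /=.
under eq_bigr => k _.
  rewrite (eq_bigr (fun i => ('chi_r i * 'chi_r'' (- i)) * ((#|G (n + 1)|%:R)^-1 * (#|G (n + 1)|%:R)^-1 * 'chi_r'' k * psi (sub0 f (Dx x k))))); last by move=> i _; ring.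
  rewrite -mulr_suml orth1.
  over.
rewrite AxE /=.
case: (eqVneq r r'') => [<-|ne]; last first.
  by rewrite mul0r big1 // => k _; rewrite mulr0 mul0r.
rewrite mul1r mulr_sumr; apply: eq_bigr => k _.
have := cardG_neq0 (n + 1); set c := (_%:R : algC) => hc.
rewrite -[true%:R]/(1:algC) mulr1; field; exact: hc.
Qed.

Lemma B_proj m (y : K m) g' g'' psi f :
  Bx dC dG y g' (Bx dC dG y g'' psi) f = (g' == g'')%:R * Bx dC dG y g' psi f.
Proof.
rewrite !BxE !addr_eq0.
case: (eqVneq g' (- delta0 dC dG f y)) => [->|ne]; last by rewrite !mul0r mulr0.
by rewrite eq_sym mulrCA.
Qed.

Lemma A_sum n (x : K n) psi f :
  \sum_(s : Iirr [set: G (n + 1)]) Ax dC dG x s psi f = psi f.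
Proof.
under eq_bigr do rewrite AxE.
rewrite -mulr_sumr exchange_big /=.
under eq_bigr do rewrite -mulr_suml orth2.
rewrite (bigD1 0) //= big1 ?addr0; last first.
  by move=> h /negbTE ->; rewrite mulr0 mul0r.
by rewrite eqxx mulr1 mulrA mulVf ?cardG_neq0 // mul1r sub0_0.
Qed.

Lemma B_sum n (x : K n) psi f :
  \sum_(k : G (n - 1)) Bx dC dG x k psi f = psi f.
Proof.
under eq_bigr do rewrite BxE addr_eq0.
rewrite -mulr_suml (bigD1 (- delta0 dC dG f x)) //= big1 ?addr0 ?eqxx ?mul1r //.
by move=> k /negbTE ->.
Qed.

End Main.


Theorem lemma5
  (K : int -> finType) (G : int -> finZmodType)
  (dC : forall n : int, K n -> K (n - 1) -> int)
  (dG : forall n : int, {additive G n -> G (n - 1)})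
  (hC : forall (n : int) (x : K n) (z : K (n - 1 - 1)),
      \sum_(y : K (n - 1)) dC n x y * dC (n - 1) y z = 0)
  (hG : forall (n : int) (a : G n), dG (n - 1) (dG n a) = 0)
  (hfin : exists N : nat, forall n : int, (N < `|n|)%N -> #|K n| = 0%N)
  (n m : int) (x : K n) (y : K m)
  (r r'' : Iirr [set: G (n + 1)]) (r' : Iirr [set: G (m + 1)])
  (g : G (n - 1)) (g' g'' : G (m - 1)) :
  [/\ (* (i) *)
      Ax dC dG x r \o Ax dC dG y r' = Ax dC dG y r' \o Ax dC dG x r,
      Bx dC dG x g \o Bx dC dG y g' = Bx dC dG y g' \o Bx dC dG x g &
      Ax dC dG x r \o Bx dC dG y g' = Bx dC dG y g' \o Ax dC dG x r] /\
  [/\ (* (ii) *)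
      Ax dC dG x r \o Ax dC dG x r'' =
        (if r == r'' then Ax dC dG x r else op0 (K := K) (G := G)) &
      Bx dC dG y g' \o Bx dC dG y g'' =
        (if g' == g'' then Bx dC dG y g' else op0 (K := K) (G := G))] /\
  [/\ (* (iii) *)
      (fun psi f => \sum_(s : Iirr [set: G (n + 1)]) Ax dC dG x s psi f) = id &
      (fun psi f => \sum_(k : G (n - 1)) Bx dC dG x k psi f) = id].
Proof.
split; [|split]; [split|split|split];
  apply: functional_extensionality => psi; apply: functional_extensionality => f => /=.
- exact: A_comm.
- exact: B_comm.
- exact: (AB_comm _ _ _ _ hC hG).
- rewrite A_proj; case: eqVneq => _; [by rewrite mul1r | by rewrite mul0r].
- rewrite B_proj; case: eqVneq => _; [by rewrite mul1r | by rewrite mul0r].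
- exact: A_sum.
- exact: B_sum.
Qed.
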